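(* Let $L_\alpha(x,t)=\partial/\partial x^\alpha-\hbar^{-1}C_\alpha(x,t)$, $\alpha=1,\dots,n$, be pairwise commuting for each $t$ and satisfy, for a fixed $b\in Diag[\hbar^{-1}]$, $$\frac{\partial L_\alpha}{\partial t}=[\varphi(b)_{\le-1},L_\alpha]\quad(\alpha=1,\dots,n).$$ Let $T(x,t)$ be a dressing transformation depending smoothly on $t$, with $T^{-1}L_\alpha T=\partial/\partial x^\alpha+\sum_{k\ge-1}\hbar^kh_{k,\alpha}(x,t)$, $h_{k,\alpha}(x,t)\in Diag$. Then for each $k$ there is a diagonal-matrix-valued function $B_k(x,t)$, independent of $\alpha$, such that $$\frac{\partial h_{k,\alpha}}{\partial t}+\frac{\partial B_k}{\partial x^\alpha}=0\quad\text{for all }\alpha.$$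
   Context: $C_\alpha$ are $Mat(n,\mathbb C)$-valued analytic functions of $x$ in a domain of $\mathbb C^n$ and of $t$; $Diag$: diagonal matrices; $Diag[\hbar^{-1}]$: polynomials in $\hbar^{-1}$ with constant diagonal coefficients. A dressing transformation is an invertible $T\in Mat(n,\mathbb C)[[\hbar]]$ with $T^{-1}L_\alpha T=\partial/\partial x^\alpha+h_\alpha$, $h_\alpha\in\hbar^{-1}Diag[[\hbar]]$ for all $\alpha$; it is assumed to exist and is assumed that the leading terms $h_{-1,\alpha}$, $\alpha=1,\dots,n$, span $Diag$ (as in the semisimple Frobenius setting). $\varphi(b)=TbT^{-1}$. For a Laurent series $v=\sum_lv_l\hbar^l$, $v_{\le k}=\sum_{l\le k}v_l\hbar^l$. Conjugation $T^{-1}(\partial+A)T=\partial+T^{-1}\partial T+T^{-1}AT$; $[\partial+A,M]=\partial M+[A,M]$. *)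

(* Defs.v *)
(* Abstract differential-algebra rendering of the setting:
   F = ring of (analytic) scalar functions of (x,t), with commuting
   derivations d_alpha = d/dx^alpha and dt = d/dt. *)
From mathcomp Require Import all_boot all_order all_algebra.
Set Implicit Arguments. Unset Strict Implicit. Unset Printing Implicit Defensive.
Import GRing.Theory.
Local Open Scope ring_scope.

Section Defs.
Variables (F : comUnitRingType) (n : nat).

Definition is_derivation (d : F -> F) : Prop :=
  (forall a b, d (a + b) = d a + d b) /\ (forall a b, d (a * b) = d a * b + a * d b).

(* Laurent series in hbar with coefficients in Mat(n, F): k |-> coefficient of hbar^k *)
Definition lser := int -> 'M[F]_n.

Definition lbounded (N : nat) (A : lser) : Prop := forall k : int, k < - (N%:Z) -> A k = 0.

(* product of two Laurent series, both supported in degrees >= -N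
   (Cauchy product, the sum being finite): (AB)_k = sum_{i+j=k} A_i B_j *)
Definition lmul (N : nat) (A B : lser) : lser := fun k =>
  \sum_(i < (absz (k + (2 * N)%:Z)).+1) A (i%:Z - N%:Z) *m B (k - i%:Z + N%:Z).

Definition ladd (A B : lser) : lser := fun k => A k + B k.
Definition lopp (A : lser) : lser := fun k => - A k.
Definition lcomm (N : nat) (A B : lser) : lser := fun k => lmul N A B k - lmul N B A k.

Definition lone : lser := fun k => if k == 0 then 1%:M else 0.

Definition lder (d : F -> F) (A : lser) : lser := fun k => map_mx d (A k).

Definition ltrunc (m : int) (A : lser) : lser := fun k => if k <= m then A k else 0.

Definition hinv (M : 'M[F]_n) : lser := fun k => if k == -1 then M else 0.

(* Multiplicative part of the conjugated operator T^{-1}(d + A)T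
   = d + T^{-1} dT + T^{-1} A T   (Tinv is the inverse series of T) *)
Definition conj_op (N : nat) (d : F -> F) (Tinv T A : lser) : lser :=
  ladd (lmul N Tinv (lder d T)) (lmul N (lmul N Tinv A) T).

(* [d1 + A1, d2 + A2] for commuting derivations d1, d2:
   the multiplication operator d1 A2 - d2 A1 + [A1, A2] *)
Definition comm_op (N : nat) (d1 : F -> F) (A1 : lser) (d2 : F -> F) (A2 : lser)
  : lser := fun k => lder d1 A2 k - lder d2 A1 k + lcomm N A1 A2 k.

End Defs.

(* Main.v *)
Require Import Defs.
From mathcomp Require Import all_boot all_order all_algebra.
From mathcomp Require Import zify ring.
From Stdlib Require Import FunctionalExtensionality.
Set Implicit Arguments. Unset Strict Implicit. Unset Printing Implicit Defensive.
Import GRing.Theory Num.Theory.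
Local Open Scope ring_scope.

Section Der.
Variables (F : comUnitRingType) (d : F -> F) (hd : is_derivation d).

Lemma dD a b : d (a + b) = d a + d b. Proof. by case: hd. Qed.
Lemma dM a b : d (a * b) = d a * b + a * d b. Proof. by case: hd. Qed.
Lemma d0 : d 0 = 0.
Proof. by apply/(@addrI _ (d 0)); rewrite -dD !addr0. Qed.
Lemma dN a : d (- a) = - d a.
Proof. by apply/(@addrI _ (d a)); rewrite -dD !subrr d0. Qed.
Lemma d1 : d 1 = 0.
Proof. have h := dM 1 1; rewrite !mulr1 mul1r in h.
by apply/(@addrI _ (d 1)); rewrite addr0 -h. Qed.
Lemma dsum I (r : seq I) (P : pred I) (f : I -> F) :
  d (\sum_(i <- r | P i) f i) = \sum_(i <- r | P i) d (f i).
Proof. exact: (big_morph d dD d0). Qed.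

Lemma mxdD m p (A B : 'M[F]_(m,p)) : map_mx d (A + B) = map_mx d A + map_mx d B.
Proof. by apply/matrixP => i j; rewrite !mxE dD. Qed.
Lemma mxdN m p (A : 'M[F]_(m,p)) : map_mx d (- A) = - map_mx d A.
Proof. by apply/matrixP => i j; rewrite !mxE dN. Qed.
Lemma mxd0 m p : map_mx d (0 : 'M[F]_(m,p)) = 0.
Proof. by apply/matrixP => i j; rewrite !mxE d0. Qed.
Lemma mxdM m p q (A : 'M[F]_(m,p)) (B : 'M[F]_(p,q)) :
  map_mx d (A *m B) = map_mx d A *m B + A *m map_mx d B.
Proof.
apply/matrixP => i j; rewrite !mxE dsum -big_split; apply: eq_bigr => l _.
by rewrite dM !mxE.
Qed.
Lemma mxdsum m p I (r : seq I) (P : pred I) (f : I -> 'M[F]_(m,p)) :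
  map_mx d (\sum_(i <- r | P i) f i) = \sum_(i <- r | P i) map_mx d (f i).
Proof. exact: (big_morph (map_mx d) (@mxdD m p) (@mxd0 m p)). Qed.
End Der.
Section L.
Variables (F : comUnitRingType) (n : nat).
Local Notation ls := (lser F n).

Definition sup (lo : int) (A : ls) := forall k, k < lo -> A k = 0.

Section N.
Variable N : nat.
Implicit Types A B C : ls.

Lemma lmul_addl A B C : lmul N (ladd A B) C = ladd (lmul N A C) (lmul N B C).
Proof.
apply: functional_extensionality => k; rewrite /lmul /ladd -big_split.
by apply: eq_bigr => i _; rewrite mulmxDl.
Qed.
Lemma lmul_addr A B C : lmul N A (ladd B C) = ladd (lmul N A B) (lmul N A C).
Proof.
apply: functional_extensionality => k; rewrite /lmul /ladd -big_split.
by apply: eq_bigr => i _; rewrite mulmxDr.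
Qed.
Lemma lmul_oppl A B : lmul N (lopp A) B = lopp (lmul N A B).
Proof.
apply: functional_extensionality => k; rewrite /lmul /lopp -sumrN.
by apply: eq_bigr => i _; rewrite mulNmx.
Qed.
Lemma lmul_oppr A B : lmul N A (lopp B) = lopp (lmul N A B).
Proof.
apply: functional_extensionality => k; rewrite /lmul /lopp -sumrN.
by apply: eq_bigr => i _; rewrite mulmxN.
Qed.

Lemma lder_add d A B : is_derivation d -> lder d (ladd A B) = ladd (lder d A) (lder d B).
Proof. by move=> hd; apply: functional_extensionality => k; rewrite /lder /ladd mxdD. Qed.
Lemma lder_opp d A : is_derivation d -> lder d (lopp A) = lopp (lder d A).
Proof. by move=> hd; apply: functional_extensionality => k; rewrite /lder /lopp mxdN. Qed.
Lemma lder_mul d A B : is_derivation d ->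
  lder d (lmul N A B) = ladd (lmul N (lder d A) B) (lmul N A (lder d B)).
Proof.
move=> hd; apply: functional_extensionality => k; rewrite /lder /lmul /ladd.
rewrite mxdsum // -big_split; apply: eq_bigr => i _; by rewrite mxdM.
Qed.
Lemma lder_comm d1 d2 A : (forall f, d1 (d2 f) = d2 (d1 f)) ->
  lder d1 (lder d2 A) = lder d2 (lder d1 A).
Proof.
move=> h; apply: functional_extensionality => k; rewrite /lder.
by apply/matrixP => i j; rewrite !mxE.
Qed.

Lemma sup_mul p q A B : sup p A -> sup q B -> sup (p + q) (lmul N A B).
Proof.
move=> hA hB k hk; rewrite /lmul big1 // => i _.
case: (boolP ((i : nat)%:Z - N%:Z < p)) => h; first by rewrite hA // mul0mx.
by rewrite hB ?mulmx0 //; lia.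
Qed.
Lemma sup_le p q A : sup p A -> q <= p -> sup q A.
Proof. by move=> hA hq k hk; apply: hA; lia. Qed.
Lemma sup_add p A B : sup p A -> sup p B -> sup p (ladd A B).
Proof. by move=> hA hB k hk; rewrite /ladd hA ?hB ?addr0. Qed.
Lemma sup_opp p A : sup p A -> sup p (lopp A).
Proof. by move=> hA k hk; rewrite /lopp hA ?oppr0. Qed.
Lemma sup_der p d A : is_derivation d -> sup p A -> sup p (lder d A).
Proof. by move=> hd hA k hk; rewrite /lder hA ?mxd0. Qed.
Lemma sup_trunc p m A : sup p A -> sup p (ltrunc m A).
Proof. by move=> hA k hk; rewrite /ltrunc hA ?if_same. Qed.

Lemma lmul_low A B k : sup (- N%:Z) B -> k + (2 * N)%:Z < 0 -> lmul N A B k = 0.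
Proof.
move=> hB hk; rewrite /lmul big1 // => i _; rewrite hB ?mulmx0 //; lia.
Qed.

Definition sg A : nat -> 'M[F]_n := fun i => A (i%:Z - N%:Z).
Definition conv (u v : nat -> 'M[F]_n) m := \sum_(i < m.+1) u i *m v (m - i)%N.

Lemma lmul_conv A B k : 0 <= k + (2 * N)%:Z ->
  lmul N A B k = conv (sg A) (sg B) (absz (k + (2 * N)%:Z)).
Proof.
move=> hk; rewrite /lmul /conv; apply: eq_bigr => i _; rewrite /sg.
have hi := ltn_ord i.
have hm : ((absz (k + (2 * N)%:Z))%:Z) = k + (2 * N)%:Z by rewrite gez0_abs.
move: hi hm; set m := absz _ => hi hm.
congr (_ *m B _); lia.
Qed.

Lemma conv_lmul A B j : conv (sg A) (sg B) j = lmul N A B (j%:Z - (2 * N)%:Z).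
Proof.
rewrite lmul_conv; last by lia.
by congr conv; apply/eqP; rewrite -eqz_nat gez0_abs; lia.
Qed.
End N.
End L.
Section Assoc.
Variables (F : comUnitRingType) (n' : nat).
Local Notation n := n'.+1.
Local Notation M := 'M[F]_n.
Local Notation ls := (lser F n).

Definition pol (u : nat -> M) m : {poly M} := \poly_(i < m.+1) u i.

Lemma conv_coef (u v : nat -> M) m : conv u v m = (pol u m * pol v m)`_m.
Proof.
rewrite coefM /conv; apply: eq_bigr => i _; rewrite !coef_poly mulmxE.
by rewrite ltn_ord ltnS leq_subr.
Qed.

Lemma coefM_ext (p p' q q' : {poly M}) m :
  (forall i, (i <= m)%N -> p`_i = p'`_i) -> (forall i, (i <= m)%N -> q`_i = q'`_i) ->
  (p * q)`_m = (p' * q')`_m.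
Proof.
move=> hp hq; rewrite !coefM; apply: eq_bigr => i _.
by rewrite hp ?hq ?leq_subr // -ltnS.
Qed.

Lemma pol_coef (u : nat -> M) m i : (i <= m)%N -> (pol u m)`_i = u i.
Proof. by move=> hi; rewrite coef_poly ltnS hi. Qed.

Lemma convA (u v w : nat -> M) m : conv (conv u v) w m = conv u (conv v w) m.
Proof.
rewrite !conv_coef.
transitivity (((pol u m * pol v m) * pol w m)`_m).
  apply: coefM_ext => // i hi; rewrite pol_coef // conv_coef.
  apply: coefM_ext => j hj; rewrite !pol_coef //; exact: leq_trans hi.
rewrite -mulrA; apply: coefM_ext => // i hi; rewrite pol_coef // conv_coef.
apply: coefM_ext => j hj; rewrite !pol_coef //; exact: leq_trans hi.
Qed.

Lemma conv_shiftl (u w : nat -> M) m N : (forall j, (j < N)%N -> u j = 0) ->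
  conv u w (N + m) = conv (fun i => u (N + i)%N) w m.
Proof.
move=> hu; rewrite /conv -addnS big_split_ord /= big1 ?add0r.
  by apply: eq_bigr => i _; rewrite subnDl.
by move=> i _; rewrite hu ?mul0mx.
Qed.

Lemma conv_shiftr (u v : nat -> M) m N : (forall j, (j < N)%N -> v j = 0) ->
  conv u v (N + m) = conv u (fun i => v (N + i)%N) m.
Proof.
move=> hv; rewrite /conv.
have -> : (N + m).+1 = (m.+1 + N)%N by rewrite addSn addnC.
rewrite big_split_ord /= [X in _ + X]big1 ?addr0.
  by apply: eq_bigr => i _; rewrite addnBA // -ltnS.
move=> i _; rewrite hv ?mulmx0 //.
have := ltn_ord i; lia.
Qed.

Variable N : nat.

Lemma sg_mul (A B : ls) : sg N (lmul N A B) = (fun i => conv (sg N A) (sg N B) (N + i)%N).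
Proof.
apply: functional_extensionality => i; rewrite conv_lmul /sg.
congr (lmul N A B); lia.
Qed.

Lemma lmulA (A B C : ls) : sup (- N%:Z) A -> sup (- N%:Z) B -> sup (- N%:Z) C ->
  sup (- N%:Z) (lmul N A B) -> sup (- N%:Z) (lmul N B C) ->
  lmul N (lmul N A B) C = lmul N A (lmul N B C).
Proof.
move=> hA hB hC hAB hBC; apply: functional_extensionality => k.
case: (boolP (k + (2 * N)%:Z < 0)) => hk.
  by rewrite !lmul_low.
rewrite !lmul_conv; try lia.
set m := absz _.
rewrite sg_mul sg_mul -conv_shiftl; last first.
  by move=> j hj; rewrite conv_lmul hAB //; lia.
rewrite -conv_shiftr; last first.
  by move=> j hj; rewrite conv_lmul hBC //; lia.
exact: convA.
Qed.

Lemma lone_mul (A : ls) : sup (- N%:Z) A -> lmul N (lone F n) A = A.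
Proof.
move=> hA; apply: functional_extensionality => k.
case: (boolP (k + (2 * N)%:Z < 0)) => hk.
  by rewrite lmul_low // hA //; lia.
rewrite lmul_conv; last by lia.
have hm : ((absz (k + (2 * N)%:Z))%:Z) = k + (2 * N)%:Z by rewrite gez0_abs; lia.
move: hm; set m := absz _ => hm.
rewrite /conv /sg /lone.
case: (leqP N m) => hNm.
  have hN : (N < m.+1)%N by [].
  rewrite (bigD1 (Ordinal hN)) //= big1 ?addr0.
    rewrite subrr eqxx mul1mx; congr A; lia.
  move=> i hi; have : (i : nat) != N by [].
  move=> /eqP hiN; have -> : ((i : nat)%:Z - N%:Z == 0) = false by apply/negbTE/eqP; lia.
  by rewrite mul0mx.
rewrite big1 ?hA //; first by lia.
move=> i _; have := ltn_ord i => hi.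
have -> : ((i : nat)%:Z - N%:Z == 0) = false by apply/negbTE/eqP; lia.
by rewrite mul0mx.
Qed.
End Assoc.
Section Core.
Variables (F : comUnitRingType) (n' : nat).
Local Notation n := n'.+1.
Local Notation M := 'M[F]_n.
Local Notation ls := (lser F n).

Lemma mul_diag_l m (X Y : 'M[F]_m) i : is_diag_mx X -> (X *m Y) i i = X i i * Y i i.
Proof.
move=> /is_diag_mxP hX; rewrite mxE (bigD1 i) //= big1 ?addr0 // => j hj.
by rewrite hX ?mul0r // eq_sym.
Qed.
Lemma mul_diag_r m (X Y : 'M[F]_m) i : is_diag_mx X -> (Y *m X) i i = Y i i * X i i.
Proof.
move=> /is_diag_mxP hX; rewrite mxE (bigD1 i) //= big1 ?addr0 // => j hj.
by rewrite hX ?mulr0.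
Qed.

Lemma diag_comm N (H R : ls) k i : (forall l, is_diag_mx (H l)) -> 0 <= k + (2 * N)%:Z ->
  (lmul N H R k) i i = (lmul N R H k) i i.
Proof.
move=> hH hk; rewrite !lmul_conv //; set m := absz _; rewrite /conv !summxE.
rewrite [RHS](reindex_inj rev_ord_inj) /=; apply: eq_bigr => l _.
rewrite mul_diag_l ?mul_diag_r; try exact: hH.
rewrite [X in _ = X]mulrC; congr (_ * _).
by rewrite subSS subKn // -ltnS.
Qed.

Lemma sup_mulW N p q r (A B : ls) : sup p A -> sup q B -> r <= p + q -> sup r (lmul N A B).
Proof. by move=> hA hB hr; apply: sup_le (sup_mul N hA hB) hr. Qed.

End Core.
Section Core2.
Variables (F : comUnitRingType) (n' : nat).
Local Notation n := n'.+1.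
Local Notation M := 'M[F]_n.
Local Notation ls := (lser F n).
Variables (d dt : F -> F) (hd : is_derivation d) (hdt : is_derivation dt)
  (hddt : forall f, d (dt f) = dt (d f))
  (C : M) (db : nat) (b : ls) (hb : sup (- db%:Z) b)
  (T Tinv : ls) (hT : sup 0 T) (hTi : sup 0 Tinv)
  (hTTinv : lmul db.+1 T Tinv = lone F n) (hTinvT : lmul db.+1 Tinv T = lone F n)
  (h : ls) (hh : sup (-1) h) (hhd : forall k, is_diag_mx (h k)).
Local Notation N := db.+1.
Local Notation A := (hinv (- C)).
Local Notation P := (ltrunc (-1) (lmul N (lmul N T b) Tinv)).
Local Notation Ta := (lder d T).
Local Notation Tt := (lder dt T).
Local Notation ht := (lder dt h).
Local Notation P' := (lder d P).
Local Notation At := (lder dt A).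
Local Notation R := (ladd (lmul N Tinv Tt) (lopp (lmul N (lmul N Tinv P) T))).
Local Notation R' := (lder d R).
Hypotheses (hdress : conj_op N d Tinv T A = h)
  (hflow : At = lopp (comm_op N d A (fun _ => 0) P)).

Lemma sN0 (X : ls) : sup 0 X -> sup (- N%:Z) X.
Proof. by move=> hX; apply: sup_le hX _; lia. Qed.
Lemma sN1 (X : ls) : sup (-1) X -> sup (- N%:Z) X.
Proof. by move=> hX; apply: sup_le hX _; lia. Qed.
Lemma sNd (X : ls) : sup (- db%:Z) X -> sup (- N%:Z) X.
Proof. by move=> hX; apply: sup_le hX _; lia. Qed.
Lemma s0 (X Y : ls) : sup 0 X -> sup 0 Y -> sup 0 (lmul N X Y).
Proof. by move=> hX hY; apply: sup_mulW hX hY _; lia. Qed.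
Lemma s0l p (X Y : ls) : sup 0 X -> sup p Y -> sup p (lmul N X Y).
Proof. by move=> hX hY; apply: sup_mulW hX hY _; lia. Qed.
Lemma s0r p (X Y : ls) : sup p X -> sup 0 Y -> sup p (lmul N X Y).
Proof. by move=> hX hY; apply: sup_mulW hX hY _; lia. Qed.
Lemma s1d (X Y : ls) : sup (-1) X -> sup (- db%:Z) Y -> sup (- N%:Z) (lmul N X Y).
Proof. by move=> hX hY; apply: sup_mulW hX hY _; lia. Qed.
Lemma sd1 (X Y : ls) : sup (- db%:Z) X -> sup (-1) Y -> sup (- N%:Z) (lmul N X Y).
Proof. by move=> hX hY; apply: sup_mulW hX hY _; lia. Qed.
Lemma sA : sup (-1) A.
Proof. move=> k hk; rewrite /hinv; case: eqP => // ek; lia. Qed.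
Lemma sTa : sup 0 Ta. Proof. exact: sup_der. Qed.
Lemma sTt : sup 0 Tt. Proof. exact: sup_der. Qed.
Lemma sht : sup (-1) ht. Proof. exact: sup_der. Qed.
Lemma sP : sup (- db%:Z) P.
Proof. apply: sup_trunc; apply: s0r => //; apply: sup_mulW hT hb _; lia. Qed.
Lemma sP' : sup (- db%:Z) P'. Proof. exact: sup_der sP. Qed.
Lemma sR : sup (- db%:Z) R.
Proof.
apply: sup_add; last by apply: sup_opp; apply: s0r => //; apply: s0l => //; exact: sP.
by apply: sup_le (s0 hTi sTt) _; lia.
Qed.
Lemma sR' : sup (- db%:Z) R'. Proof. exact: sup_der sR. Qed.

Lemma E1 : lmul N T h = ladd Ta (lmul N A T).
Proof.
rewrite -hdress /conj_op lmul_addr.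
rewrite -(lmulA (sN0 hT) (sN0 hTi) (sN0 sTa)); last 2 first.
- by apply: sN0; apply: s0.
- by apply: sN0; apply: s0 => //; exact: sTa.
rewrite hTTinv lone_mul; last exact: sN0 sTa.
rewrite -(lmulA (sN0 hT) (sN1 (s0l hTi sA)) (sN0 hT)); last 2 first.
- by apply: sN1; apply: s0l => //; apply: s0l => //; exact: sA.
- by apply: sN1; apply: s0r => //; apply: s0l => //; exact: sA.
rewrite -(lmulA (sN0 hT) (sN0 hTi) (sN1 sA)); last 2 first.
- by apply: sN0; apply: s0.
- by apply: sN1; apply: s0l => //; exact: sA.
by rewrite hTTinv lone_mul //; exact: sN1 sA.
Qed.

Lemma E3 : lmul N T R = ladd Tt (lopp (lmul N P T)).
Proof.
rewrite lmul_addr lmul_oppr.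
rewrite -(lmulA (sN0 hT) (sN0 hTi) (sN0 sTt)); last 2 first.
- by apply: sN0; apply: s0.
- by apply: sN0; apply: s0 => //; exact: sTt.
rewrite hTTinv lone_mul; last exact: sN0 sTt.
rewrite -(lmulA (sN0 hT) (sNd (s0l hTi sP)) (sN0 hT)); last 2 first.
- by apply: sNd; apply: s0l => //; apply: s0l => //; exact: sP.
- by apply: sNd; apply: s0r => //; apply: s0l => //; exact: sP.
rewrite -(lmulA (sN0 hT) (sN0 hTi) (sNd sP)); last 2 first.
- by apply: sN0; apply: s0.
- by apply: sNd; apply: s0l => //; exact: sP.
by rewrite hTTinv lone_mul //; exact: sNd sP.
Qed.

Lemma Tht : lmul N T ht =
  ladd (ladd (lder dt Ta) (ladd (lmul N At T) (lmul N A Tt))) (lopp (lmul N Tt h)).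
Proof.
apply: functional_extensionality => k.
have e := congr1 (fun f => f k) (lder_mul N T h hdt).
rewrite /= E1 lder_add // lder_mul // in e.
rewrite /ladd /lopp in e *.
apply: (addrI ((lmul N Tt h) k)); rewrite -e.
by rewrite [RHS]addrC subrK.
Qed.

Lemma AtT : lmul N At T =
  lopp (ladd (lmul N P' T) (ladd (lmul N (lmul N A P) T) (lopp (lmul N (lmul N P A) T)))).
Proof.
have -> : At = lopp (ladd P' (ladd (lmul N A P) (lopp (lmul N P A)))).
  rewrite hflow; congr lopp; apply: functional_extensionality => k.
  rewrite /comm_op /ladd /lopp /lcomm.
  have -> : lder (fun _ => 0) A k = 0 by apply/matrixP => i j; rewrite !mxE.
  by rewrite subr0.
by rewrite lmul_oppl !lmul_addl lmul_oppl.
Qed.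

Lemma lsub_eq (X Y Z : ls) : Z = ladd X Y -> Y = ladd Z (lopp X).
Proof.
move=> ->; apply: functional_extensionality => k; rewrite /ladd /lopp.
by rewrite addrC addKr.
Qed.

Lemma ETR' : lmul N T R' =
  ladd (ladd (lder d Tt) (lopp (ladd (lmul N P' T) (lmul N P Ta)))) (lopp (lmul N Ta R)).
Proof.
rewrite (lsub_eq (lder_mul N T R hd)) E3 lder_add // lder_opp // lder_mul //.
Qed.

Lemma ThR : lmul N T (lmul N h R) =
  ladd (lmul N Ta R) (ladd (lmul N A Tt) (lopp (lmul N (lmul N A P) T))).
Proof.
rewrite -(lmulA (sN0 hT) (sN1 hh) (sNd sR)); last 2 first.
- by apply: sN1; apply: s0l.
- exact: s1d hh sR.
rewrite E1 lmul_addl.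
rewrite (lmulA (sN1 sA) (sN0 hT) (sNd sR)); last 2 first.
- by apply: sN1; apply: s0r => //; exact: sA.
- by apply: sNd; apply: s0l => //; exact: sR.
rewrite E3 [lmul N A (ladd _ _)]lmul_addr [lmul N A (lopp _)]lmul_oppr.
rewrite -(lmulA (sN1 sA) (sNd sP) (sN0 hT)) //.
- exact: s1d sA sP.
- by apply: sNd; apply: s0r => //; exact: sP.
Qed.

Lemma TRh : lmul N T (lmul N R h) =
  ladd (lmul N Tt h) (lopp (ladd (lmul N P Ta) (lmul N (lmul N P A) T))).
Proof.
rewrite -(lmulA (sN0 hT) (sNd sR) (sN1 hh)); last 2 first.
- by apply: sNd; apply: s0l => //; exact: sR.
- exact: sd1 sR hh.
rewrite E3 lmul_addl lmul_oppl.
rewrite (lmulA (sNd sP) (sN0 hT) (sN1 hh)); last 2 first.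
- by apply: sNd; apply: s0r => //; exact: sP.
- by apply: sN1; apply: s0l.
rewrite E1 lmul_addr.
rewrite -(lmulA (sNd sP) (sN1 sA) (sN0 hT)) //.
- exact: sd1 sP sA.
- by apply: sN1; apply: s0r => //; exact: sA.
Qed.

Local Notation X := (ladd R' (ladd (lmul N h R) (lopp (lmul N R h)))).

Lemma TX : lmul N T ht = lmul N T X.
Proof.
rewrite Tht AtT.
rewrite [lmul N T (ladd R' _)]lmul_addr [lmul N T (ladd (lmul N h R) _)]lmul_addr.
rewrite [lmul N T (lopp _)]lmul_oppr.
rewrite ETR' ThR TRh (lder_comm _ hddt).
apply: functional_extensionality => k; rewrite /ladd /lopp.
apply/matrixP => i j; rewrite !mxE.
ring.
Qed.

Lemma sX : sup (- N%:Z) X.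
Proof.
apply: sup_add; first exact: sNd sR'.
apply: sup_add; first exact: s1d hh sR.
by apply: sup_opp; exact: sd1 sR hh.
Qed.

Lemma hX : ht = X.
Proof.
have e := congr1 (lmul N Tinv) TX.
rewrite -(lmulA (sN0 hTi) (sN0 hT) (sN1 sht)) in e; last 2 first.
- by apply: sN0; apply: s0.
- by apply: sN1; apply: s0l => //; exact: sht.
rewrite -(lmulA (sN0 hTi) (sN0 hT) sX) in e; last 2 first.
- by apply: sN0; apply: s0.
- by apply: s0l => //; exact: sX.
by rewrite hTinvT !lone_mul in e => //; [exact: sX | exact: sN1 sht].
Qed.

Lemma core_final k : -1 <= k -> forall i, dt (h k i i) = d (R k i i).
Proof.
move=> hk i.
have -> : dt (h k i i) = ht k i i.
  by rewrite /lder; symmetry; exact: (mxE _ (fun i0 j0 => dt (h k i0 j0)) i i).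
rewrite hX /ladd /lopp /= !mxE.
rewrite (@diag_comm _ _ N h) //; last by lia.
by rewrite subrr addr0.
Qed.
End Core2.

Theorem mainTheorem8
  (F : comUnitRingType) (n : nat)
  (* d/dx^alpha, alpha = 1..n, and d/dt: pairwise commuting derivations *)
  (dx : 'I_n -> F -> F) (dt : F -> F)
  (hdx : forall a, is_derivation (dx a)) (hdt : is_derivation dt)
  (hdxx : forall a b f, dx a (dx b f) = dx b (dx a f))
  (hdxt : forall a f, dx a (dt f) = dt (dx a f))
  (* L_alpha = d/dx^alpha - hbar^{-1} C_alpha *)
  (C : 'I_n -> 'M[F]_n)
  (* b in Diag[hbar^{-1}]: b = sum_{j=0}^{db} b_{-j} hbar^{-j}, constant diagonal coefficients *)
  (db : nat) (b : lser F n)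
  (hb_supp : forall k : int, (0 < k \/ k < - (db%:Z)) -> b k = 0)
  (hb_diag : forall k, is_diag_mx (b k))
  (hb_const : forall k i j, (forall a, dx a (b k i j) = 0) /\ dt (b k i j) = 0)
  (* dressing transformation T in Mat[[hbar]], invertible with inverse Tinv *)
  (T Tinv : lser F n)
  (hT : forall k : int, k < 0 -> T k = 0) (hTinv : forall k : int, k < 0 -> Tinv k = 0)
  (hTTinv : lmul db.+1 T Tinv = lone F n) (hTinvT : lmul db.+1 Tinv T = lone F n)
  (* h_alpha = sum_{k >= -1} hbar^k h_{k,alpha}, h_{k,alpha} diagonal *)
  (h : 'I_n -> lser F n)
  (hh_supp : forall a (k : int), k < -1 -> h a k = 0)
  (hh_diag : forall a k, is_diag_mx (h a k))
  (* leading terms h_{-1,alpha} span Diag *)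
  (hh_span : (\det (\matrix_(a < n, i < n) h a (-1) i i)) \is a GRing.unit)
  (* T^{-1} L_alpha T = d/dx^alpha + h_alpha *)
  (hdress : forall a, conj_op db.+1 (dx a) Tinv T (hinv (- C a)) = h a)
  (* the L_alpha pairwise commute *)
  (hcomm : forall a c, comm_op db.+1 (dx a) (hinv (- C a)) (dx c) (hinv (- C c))
                        = (fun _ => 0))
  (* dL_alpha/dt = [phi(b)_{<= -1}, L_alpha], phi(b) = T b T^{-1} *)
  (hflow : forall a,
     lder dt (hinv (- C a)) =
     lopp (comm_op db.+1 (dx a) (hinv (- C a)) (fun _ => 0)
             (ltrunc (-1) (lmul db.+1 (lmul db.+1 T b) Tinv)))) :
  forall k : int, exists B : 'M[F]_n,
    is_diag_mx B /\
    forall a, map_mx dt (h a k) + map_mx (dx a) B = 0.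
Proof.
destruct n as [|n'].
  move=> k; exists 0; split; first by apply/is_diag_mxP => -[].
  by move=> -[].
move=> k.
pose R := ladd (lmul db.+1 Tinv (lder dt T))
  (lopp (lmul db.+1 (lmul db.+1 Tinv (ltrunc (-1) (lmul db.+1 (lmul db.+1 T b) Tinv))) T)).
have hbs : sup (- db%:Z) b by move=> l hl; apply: hb_supp; right.
case: (boolP (k < -1)) => hk.
  exists 0; split; first by apply/is_diag_mxP => i j _; rewrite mxE.
  move=> a; rewrite hh_supp //; apply/matrixP => i j; rewrite !mxE.
  by rewrite (d0 hdt) (d0 (hdx a)) addr0.
exists (\matrix_(i, j) if i == j then - R k i i else 0); split.
  apply/is_diag_mxP => i j hij; rewrite mxE; case: eqP => // eij.
  by rewrite eij eqxx in hij.
move=> a; apply/matrixP => i j; rewrite !mxE.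
case: (eqVneq i j) => [<-|hij].
  rewrite (dN (hdx a)).
  rewrite (@core_final F n' (dx a) dt (hdx a) hdt (hdxt a) (C a) db b hbs T Tinv hT hTinv
     hTTinv hTinvT (h a) (fun l hl => hh_supp a l hl) (hh_diag a) (hdress a) (hflow a) k _ i).
    by rewrite /R /ladd /lopp /= !mxE subrr.
  by lia.
rewrite (d0 (hdx a)) addr0.
have /is_diag_mxP hd := hh_diag a k.
by rewrite hd ?(d0 hdt) //.
Qed.
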